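(* Let $\kappa$ be a regular uncountable limit cardinal, and let $J_\kappa=\{X\subseteq\kappa:\exists f:X\to\kappa\ \exists\theta<\kappa\ (f \text{ is regressive and } |f^{-1}(\{\eta\})|\le\theta \text{ for all }\eta<\kappa)\}$. Then $J_\kappa$ is not prepleasant: with $L'=\{\lambda+1:\lambda<\kappa \text{ an infinite cardinal}\}$ and $A_{\lambda+1}=(\lambda+1,\lambda^+)$ for $\lambda+1\in L'$, one has $L'\in J_\kappa$, each $A_{\lambda+1}$ bounded in $\kappa$, but $L'\cup\bigtriangledown_{\lambda+1\in L'}A_{\lambda+1}\notin J_\kappa$.
   Context: A function $f:X\to\kappa$ with $X\subseteq\kappa$ is regressive if $f(\alpha)<\alpha$ for all $\alpha\in X\setminus\{0\}$. For $A\subseteq\kappa$ and $X_\alpha\subseteq\kappa$, $\bigtriangledown_{\alpha\in A}X_\alpha=\{\xi<\kappa:\exists\alpha<\xi\,(\alpha\in A\wedge \xi\in X_\alpha)\}$. An ideal $I$ on $\kappa$ is prepleasant if for every $Q\in I$ and every sequence $\langle B_\alpha\rangle_{\alpha<\kappa}$ of bounded subsets of $\kappa$, $\bigtriangledown_{\alpha\in Q}B_\alpha\in I$. $(\lambda+1,\lambda^+)$ denotes the open ordinal interval. *)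

(* Defs.v *)
From HB Require Import structures.
From mathcomp Require Import all_boot all_order.
From mathcomp Require Import boolp classical_sets functions cardinality.
Set Implicit Arguments. Unset Strict Implicit. Unset Printing Implicit Defensive.
Local Open Scope classical_set_scope.
Local Open Scope card_scope.

(* The cardinal kappa is modelled as its set of ordinals: a type T with a
   strict well-order lt (T = {alpha | alpha < kappa}). *)
Definition strict_well_order (T : Type) (lt : T -> T -> Prop) : Prop :=
  (forall x, ~ lt x x) /\
  (forall x y z, lt x y -> lt y z -> lt x z) /\
  (forall x y, lt x y \/ x = y \/ lt y x) /\
  well_founded lt.

(* initial segment {beta | beta < alpha}, of cardinality |alpha| *)
Definition seg (T : Type) (lt : T -> T -> Prop) (a : T) : set T := [set b | lt b a].

Definition is_cardinal_type (T : Type) (lt : T -> T -> Prop) : Prop :=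
  forall a : T, ~ ([set: T] #<= seg lt a).

Definition uncountable_type (T : Type) : Prop := ~ ([set: T] #<= [set: nat]).

Definition bounded (T : Type) (lt : T -> T -> Prop) (B : set T) : Prop :=
  exists b, forall x, B x -> lt x b.

Definition regular_type (T : Type) (lt : T -> T -> Prop) : Prop :=
  forall A : set T, ~ bounded lt A -> [set: T] #<= A.

Definition limit_cardinal_type (T : Type) (lt : T -> T -> Prop) : Prop :=
  forall a : T, exists b : T, ~ (seg lt b #<= seg lt a).

Definition infinite_cardinal (T : Type) (lt : T -> T -> Prop) (l : T) : Prop :=
  infinite_set (seg lt l) /\ (forall b, lt b l -> ~ (seg lt l #<= seg lt b)).

Definition is_succ (T : Type) (lt : T -> T -> Prop) (l s : T) : Prop :=
  lt l s /\ forall x, lt l x -> s = x \/ lt s x.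

Definition is_card_succ (T : Type) (lt : T -> T -> Prop) (l c : T) : Prop :=
  ~ (seg lt c #<= seg lt l) /\
  forall x, ~ (seg lt x #<= seg lt l) -> c = x \/ lt c x.

(* regressive on X: f alpha < alpha for alpha in X \ {0} *)
Definition regressive (T : Type) (lt : T -> T -> Prop) (X : set T) (f : T -> T) : Prop :=
  forall a, X a -> (exists b, lt b a) -> lt (f a) a.

Definition Jk (T : Type) (lt : T -> T -> Prop) (X : set T) : Prop :=
  exists (f : T -> T) (th : T), regressive lt X f /\
    forall eta : T, (X `&` [set a | f a = eta]) #<= seg lt th.

Definition diag_union (T : Type) (lt : T -> T -> Prop) (A : set T) (Xs : T -> set T) : set T :=
  [set xi | exists a, lt a xi /\ A a /\ Xs a xi].

Definition prepleasant (T : Type) (lt : T -> T -> Prop) (I : set T -> Prop) : Prop :=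
  forall (Q : set T) (B : T -> set T), I Q -> (forall a, bounded lt (B a)) ->
    I (diag_union lt Q B).

Definition Lprime (T : Type) (lt : T -> T -> Prop) : set T :=
  [set s | exists l, infinite_cardinal lt l /\ is_succ lt l s].

(* A_{lambda+1} = (lambda+1, lambda^+); empty for indices outside L' *)
Definition Aseq (T : Type) (lt : T -> T -> Prop) (s : T) : set T :=
  [set xi | exists l c, infinite_cardinal lt l /\ is_succ lt l s /\
     is_card_succ lt l c /\ lt s xi /\ lt xi c].

(* Main.v *)
Require Import Defs.
From mathcomp Require Import all_boot all_order.
From mathcomp Require Import boolp classical_sets functions cardinality.
From Stdlib Require Import Relation_Operators Lexicographic_Product Inverse_Image.
Set Implicit Arguments. Unset Strict Implicit. Unset Printing Implicit Defensive.
Local Open Scope classical_set_scope.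
Local Open Scope card_scope.

Lemma cle_intro (T U : Type) (A : set T) (B : set U) (f : T -> U) :
  (forall x, A x -> B (f x)) -> (forall x y, A x -> A y -> f x = f y -> x = y) ->
  A #<= B.
Proof.
move=> fAB finj.
have [g] : $|{injfun A >-> B}|.
  apply/injfunPex; apply: (ex_intro2 _ _ f).
    move=> x Ax; exact: fAB.
  move=> x y; rewrite !in_setE; exact: finj.
exact: inj_card_le.
Qed.

Lemma cle_elim (T U : Type) (A : set T) (B : set U) (u0 : U) :
  A #<= B -> exists f : T -> U, (forall x, A x -> B (f x)) /\
     (forall x y, A x -> A y -> f x = f y -> x = y).
Proof.
move=> /card_leP[g].
exists (fun x => match pselect (A x) with left h => val (g (SigSub (mem_set h))) | right _ => u0 end).
split.
  move=> x Ax; case: pselect => // h; by have := valP (g (SigSub (mem_set h))); rewrite in_setE.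
move=> x y Ax Ay; case: pselect => // hx; case: pselect => // hy.
move=> /val_inj /(@inj _ _ _ g) => H.
have := H (mem_set I) (mem_set I).
by case.
Qed.

Lemma plus1 (T : Type) (A : set T) (x : T) : infinite_set A -> (A `|` [set x]) #<= A.
Proof.
move=> /infiniteP Hn.
have [Ax|nAx] := pselect (A x).
  apply: subset_card_le => z [//|->] //.
have [e [eA einj]] := cle_elim x Hn.
have eA' : forall n, A (e n) by move=> n; exact: eA.
have einj' : forall m n, e m = e n -> m = n by move=> m n; apply: einj.
pose h z := if pselect (z = x) then e 0%N else
   match pselect (exists n, z = e n) with left H => e (projT1 (cid H)).+1 | right _ => z end.
apply: (@cle_intro _ _ _ _ h).
  move=> z Hz; rewrite /h; case: pselect => zx; first exact: eA'.
  case: pselect => H; first exact: eA'.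
  by case: Hz.
move=> z w Hz Hw; rewrite /h.
case: (pselect (z = x)) => zx; case: (pselect (w = x)) => wx.
- by move=> _; rewrite zx wx.
- case: (pselect (exists n, w = e n)) => [H|H].
  + by move/einj'.
  + move=> /= E; exfalso; apply: H; exists 0%N; by rewrite E.
- case: (pselect (exists n, z = e n)) => [H|H].
  + by move=> /esym /einj'.
  + move=> /= E; exfalso; apply: H; exists 0%N; by rewrite E.
- case: (pselect (exists n, z = e n)) => [H|H];
  case: (pselect (exists n, w = e n)) => [H'|H'].
  + move=> /= /einj' [] E.
    case: (cid H) E => n /= -> ; case: (cid H') => m /= -> ; by move=> ->.
  + case: (cid H) => n /= _ /= E; exfalso; apply: H'; by exists n.+1.
  + case: (cid H') => n /= _ /= E; exfalso; apply: H; by exists n.+1.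
  + by [].
Qed.

Section WO.
Variable T : Type.
Variable lt : T -> T -> Prop.
Hypothesis Hwo : strict_well_order lt.

Lemma irr x : ~ lt x x. Proof. by case: Hwo. Qed.
Lemma trans x y z : lt x y -> lt y z -> lt x z.
Proof. by case: Hwo => _ [H _]; apply: H. Qed.
Lemma tri x y : lt x y \/ x = y \/ lt y x.
Proof. by case: Hwo => _ [_ [H _]]; apply: H. Qed.
Lemma wf : well_founded lt. Proof. by case: Hwo => _ [_ [_ H]]. Qed.

Lemma asym x y : lt x y -> ~ lt y x.
Proof. move=> h1 h2; exact: (irr (trans h1 h2)). Qed.

Lemma nlt_le x y : ~ lt x y -> lt y x \/ y = x.
Proof. by case: (tri x y) => [//|[->|]]; [right|left]. Qed.

Lemma nlt_lt {x y z} : ~ lt y x -> lt y z -> lt x z.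
Proof. by move=> h yz; case: (nlt_le h) => [h'|->] //; apply: trans h' yz. Qed.

Lemma least (P : T -> Prop) : (exists x, P x) ->
  exists x, P x /\ forall y, P y -> ~ lt y x.
Proof.
move=> [x Px]; apply: contrapT => H.
suff : forall z, ~ P z by move/(_ x).
move=> z; elim/(well_founded_induction wf): z => z IH Pz.
apply: H; exists z; split => // y Py lyz; exact: (IH y lyz Py).
Qed.

Lemma seg_sub a b : ~ lt b a -> seg lt a `<=` seg lt b.
Proof.
move=> h x; rewrite /seg /= => xa.
by case: (nlt_le h) => [ab|<-] //; apply: trans xa ab.
Qed.

Lemma seg_cle a b : ~ lt b a -> seg lt a #<= seg lt b.
Proof. by move/seg_sub/subset_card_le. Qed.

Lemma infcard_limit a : infinite_set (seg lt a) ->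
  (forall d, lt d a -> ~ (seg lt a #<= seg lt d)) ->
  forall y, lt y a -> exists y', lt y y' /\ lt y' a.
Proof.
move=> ainf acard y ya; apply: contrapT => H.
have sub : seg lt a `<=` seg lt y `|` [set y].
  move=> z; rewrite /seg /= => za.
  case: (tri z y) => [zy|[->|yz]]; [by left|by right|].
  by exfalso; apply: H; exists z.
have [fin|inf] := pselect (finite_set (seg lt y)).
  apply: ainf; apply: (sub_finite_set sub).
  by rewrite finite_setU; split => //; apply: finite_set1.
apply: (acard y ya).
apply: card_le_trans (subset_card_le sub) _.
exact: plus1.
Qed.


Definition sq (a b : T) : set (T * T) := seg lt a `*` seg lt b.

Lemma sq_cle a b a' b' : seg lt a #<= seg lt a' -> seg lt b #<= seg lt b' ->
  sq a b #<= sq a' b'.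
Proof.
move=> /(cle_elim a)[f [fA finj]] /(cle_elim a)[g [gA ginj]].
apply: (@cle_intro _ _ _ _ (fun p => (f p.1, g p.2))).
  by move=> p [/= h1 h2]; split; [apply: fA|apply: gA].
move=> [x1 x2] [y1 y2] [/= hx1 hx2] [/= hy1 hy2] [] /finj-> // /ginj-> //.
Qed.

Definition mx (p : T * T) := if pselect (lt p.1 p.2) then p.2 else p.1.

Lemma mx_ge1 p : ~ lt (mx p) p.1.
Proof.
rewrite /mx; case: pselect => h /=; first exact: asym.
exact: irr.
Qed.

Lemma mx_ge2 p : ~ lt (mx p) p.2.
Proof.
rewrite /mx; case: pselect => h /=; first exact: irr.
by case: (nlt_le h) => [h'|->]; [apply: asym|apply: irr].
Qed.

Definition key (p : T * T) := (mx p, p).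
Definition G (p q : T * T) : Prop :=
  slexprod T (T * T) lt (slexprod T T lt lt) (key p) (key q).

Lemma wf_G : well_founded G.
Proof.
apply: (wf_inverse_image _ _ _ key).
apply: wf_slexprod; first exact: wf.
apply: wf_slexprod; exact: wf.
Qed.

Lemma G_tot p q : p <> q -> G p q \/ G q p.
Proof.
move=> pq; rewrite /G /key.
case: (tri (mx p) (mx q)) => [h|[h|h]].
- by left; constructor.
- rewrite h; case: p pq h => p1 p2; case: q => q1 q2 pq h.
  case: (tri p1 q1) => [h1|[h1|h1]].
  + by left; constructor 2; constructor.
  + subst p1; case: (tri p2 q2) => [h2|[h2|h2]].
    * by left; constructor 2; constructor 2.
    * by subst.
    * by right; constructor 2; constructor 2.
  + by right; constructor 2; constructor.
- by right; constructor.
Qed.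

Lemma G_mx q p : G q p -> ~ lt (mx p) (mx q).
Proof.
rewrite /G /key => h; inversion h; subst.
- exact: asym.
- exact: irr.
Qed.

Definition infcard (l : T) := infinite_set (seg lt l) /\
  (forall b, lt b l -> ~ (seg lt l #<= seg lt b)).

Lemma small_sq l : (forall y, lt y l -> infcard y -> sq y y #<= seg lt y) ->
  infcard l -> forall d, lt d l -> ~ (seg lt l #<= sq d d).
Proof.
move=> IH [linf lcard] d dl H.
have [fin|inf] := pselect (finite_set (seg lt d)).
  by apply: linf; apply: (card_le_finite H); apply: finite_setX.
have [mu [Pmu mumin]] := @least (fun x => seg lt d #<= seg lt x) (ex_intro _ d (card_lexx _)).
have mud : ~ lt d mu by move=> h; exact: (mumin d (card_lexx _) h).
have mul : lt mu l by case: (nlt_le mud) => [h|->] //; exact: trans h dl.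
have dmu : seg lt mu #<= seg lt d by exact: seg_cle.
have muinf : infinite_set (seg lt mu).
  by move=> h; apply: inf; apply: card_le_finite Pmu h.
have mucard : forall b, lt b mu -> ~ (seg lt mu #<= seg lt b).
  move=> b bmu h; apply: (mumin b) => //; exact: card_le_trans Pmu h.
have := IH mu mul (conj muinf mucard) => Hmu.
apply: (lcard d dl).
apply: card_le_trans H _.
apply: card_le_trans (sq_cle Pmu Pmu) _.
exact: card_le_trans Hmu dmu.
Qed.

Definition minout (l : T) (S : set T) : T :=
  match pselect (exists y, lt y l /\ ~ S y) with
  | left H => projT1 (cid (@least (fun y => lt y l /\ ~ S y) H))
  | right _ => l end.

Lemma minout_spec l S : (exists y, lt y l /\ ~ S y) ->
  lt (minout l S) l /\ ~ S (minout l S).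
Proof.
move=> H; rewrite /minout.
case: (pselect (exists y, lt y l /\ ~ S y)) => [H'|//].
destruct (cid (@least (fun y => lt y l /\ ~ S y) H')) as [x [[h1 h2] h3]]. by split.
Qed.

Lemma minout_ext l S1 S2 : (forall y, S1 y <-> S2 y) -> minout l S1 = minout l S2.
Proof.
by move=> h; have -> : S1 = S2 by apply: funext => y; apply: propext.
Qed.

Definition Fh (l : T) (p : T * T) (r : forall q, G q p -> T) : T :=
  minout l [set y | exists q (H : G q p), sq l l q /\ y = r q H].

Definition hh (l : T) := Fix wf_G (fun _ => T) (Fh l).

Lemma hh_eq l p : hh l p =
  minout l [set y | exists q, G q p /\ sq l l q /\ y = hh l q].
Proof.
rewrite /hh Fix_eq.
  rewrite /Fh; apply: minout_ext => y; split.
    by move=> [q [H [s ->]]]; exists q.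
  by move=> [q [H [s ->]]]; exists q, H.
move=> x r1 r2 Hr; rewrite /Fh; apply: minout_ext => y; split.
  by move=> [q [H [s ->]]]; exists q, H; rewrite Hr.
by move=> [q [H [s ->]]]; exists q, H; rewrite Hr.
Qed.

Lemma hessenberg l : infcard l -> sq l l #<= seg lt l.
Proof.
elim/(well_founded_induction wf): l => l IH lic.
have small := small_sq (fun y yl yic => IH y yl yic) lic.
have lim := infcard_limit lic.1 lic.2.
set Img := fun p => [set y | exists q, G q p /\ sq l l q /\ y = hh l q].
have ex : forall p, sq l l p -> exists y, lt y l /\ ~ Img p y.
  move=> p [p1 p2]; apply: contrapT => H.
  have cover : forall y, lt y l -> Img p y.
    move=> y yl; apply: contrapT => ny; apply: H; by exists y.
  have mxl : lt (mx p) l by rewrite /mx; case: (pselect (lt p.1 p.2)) => _ /=.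
  have [m' [mm' m'l]] := lim _ mxl.
  apply: (small m' m'l).
  pose inv y := match pselect (Img p y) with left H => projT1 (cid H) | right _ => p end.
  apply: (@cle_intro _ _ _ _ inv).
    move=> y yl; rewrite /inv; case: pselect => [H'|/(_ (cover y yl))//].
    case: cid => q /= [Gq [_ _]].
    have := G_mx Gq => hq.
    split; rewrite /seg /=.
      exact: nlt_lt (@mx_ge1 q) (nlt_lt hq mm').
    exact: nlt_lt (@mx_ge2 q) (nlt_lt hq mm').
  have inv_spec : forall y, lt y l -> y = hh l (inv y).
    move=> y yl; rewrite /inv; case: pselect => [H'|/(_ (cover y yl))//].
    by case: cid => q /= [_ [_ ->]].
  move=> y z yl zl E.
  by rewrite (inv_spec y yl) (inv_spec z zl) E.
have hl : forall p, sq l l p -> lt (hh l p) l /\ ~ Img p (hh l p).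
  by move=> p sp; rewrite hh_eq; apply: minout_spec; exact: ex.
apply: (@cle_intro _ _ _ _ (hh l)).
  by move=> p sp; exact: (hl p sp).1.
move=> p q sp sq' E; apply: contrapT => pq.
case: (G_tot pq) => Gpq.
  by apply: (hl q sq').2; exists p; split => //; split.
by apply: (hl p sp).2; exists q; split => //; split.
Qed.

Lemma lt_nlt {x y z} : lt x y -> ~ lt z y -> lt x z.
Proof. by move=> xy h; case: (nlt_le h) => [h'|<-] //; apply: trans xy h'. Qed.

Lemma mx_lt p c : lt p.1 c -> lt p.2 c -> lt (mx p) c.
Proof. by rewrite /mx; case: (pselect (lt p.1 p.2)) => _ /=. Qed.

Lemma cs_lt l c : infcard l -> is_card_succ lt l c -> lt l c.
Proof.
move=> lic [c1 c2]; apply: contrapT => h; apply: c1; exact: seg_cle.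
Qed.

Lemma cs_below l c : infcard l -> is_card_succ lt l c ->
  forall x, lt x c -> seg lt x #<= seg lt l.
Proof.
move=> lic [c1 c2] x xc; apply: contrapT => h.
by case: (c2 x h) => [E|h']; [rewrite E in xc; apply: irr xc|apply: asym xc h'].
Qed.

Lemma cs_infcard l c : infcard l -> is_card_succ lt l c -> infcard c.
Proof.
move=> lic cs; have lc := cs_lt lic cs; split.
  apply: sub_infinite_set lic.1; apply: seg_sub; exact: asym.
move=> b bc h; apply: cs.1; apply: card_le_trans h _; exact: cs_below cs b bc.
Qed.

Lemma regR l c (S : set T) : infcard l -> is_card_succ lt l c ->
  S `<=` seg lt c -> S #<= seg lt l -> exists b, lt b c /\ forall x, S x -> lt x b.
Proof.
move=> lic cs Sc Sl; apply: contrapT => H.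
have cic := cs_infcard lic cs.
have lim := infcard_limit cic.1 cic.2.
have sel0 : forall y, exists x, lt y c -> S x /\ lt y x.
  move=> y; have [yc|nyc] := pselect (lt y c); last by exists y.
  have [y' [yy' y'c]] := lim y yc.
  have : ~ (forall x, S x -> lt x y') by move=> h; apply: H; exists y'.
  move=> /existsNP[x /not_implyP[Sx nxy']]; exists x => _; split => //.
  exact: lt_nlt yy' nxy'.
have [sel selP] := choice sel0.
have [i [iS iinj]] := cle_elim l Sl.
have J0 : forall x, exists g : T -> T, lt x c ->
    (forall y, seg lt x y -> seg lt l (g y)) /\
    (forall y z, seg lt x y -> seg lt x z -> g y = g z -> y = z).
  move=> x; have [xc|nxc] := pselect (lt x c); last by exists id.
  have [g gP] := cle_elim l (cs_below lic cs xc).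
  by exists g.
have [J JP] := choice J0.
apply: cs.1; apply: card_le_trans (hessenberg lic).
apply: (@cle_intro _ _ _ _ (fun y => (i (sel y), J (sel y) y))).
  move=> y yc; have [Ss ys] := selP y yc; split => /=.
    exact: iS.
  by apply: (JP _ (Sc _ Ss)).1.
move=> y z yc zc [] /iinj E.
have [Ssy ysy] := selP y yc; have [Ssz zsz] := selP z zc.
rewrite (E Ssy Ssz) => E2.
apply: (JP _ (Sc _ Ssz)).2 => //.
by rewrite -(E Ssy Ssz).
Qed.

Lemma no_J l s c (X : set T) : infcard l -> is_succ lt l s -> is_card_succ lt l c ->
  (forall x, lt s x -> lt x c -> X x) -> forall f th, regressive lt X f ->
  (forall eta, (X `&` [set a | f a = eta]) #<= seg lt th) -> lt th l -> False.
Proof.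
move=> lic ss cs WX f th freg fib thl.
have lc := cs_lt lic cs.
have cic := cs_infcard lic cs.
have lim := infcard_limit cic.1 cic.2.
have sc : lt s c.
  have [y' [ly' y'c]] := lim l lc.
  by case: (ss.2 y' ly') => [->|h] //; apply: trans h y'c.
have G0 : forall eta, exists g : T -> T,
    (forall x, (X `&` [set a | f a = eta]) x -> seg lt th (g x)) /\
    (forall x y, (X `&` [set a | f a = eta]) x -> (X `&` [set a | f a = eta]) y ->
       g x = g y -> x = y).
  move=> eta; exact: cle_elim l (fib eta).
have [g gP] := choice G0.
pose P gam := [set x | lt s x /\ lt x c /\ lt (f x) gam].
have Pb : forall gam, lt gam c -> P gam #<= seg lt l.
  move=> gam gc.
  apply: card_le_trans (hessenberg lic).
  apply: card_le_trans (sq_cle (cs_below lic cs gc) (seg_cle (asym thl))).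
  apply: (@cle_intro _ _ _ _ (fun x => (f x, g (f x) x))).
    move=> x [sx [xc fx]]; split => //=.
    by apply: (gP (f x)).1; split => //; apply: WX.
  move=> x y [sx [xc fx]] [sy [yc fy]] [] E1 E2.
  have Xx : (X `&` [set a | f a = f x]) x by split => //; apply: WX.
  have Xy : (X `&` [set a | f a = f x]) y by split; [apply: WX|rewrite /= E1].
  apply: (gP (f x)).2 Xx Xy _; by rewrite {2}E1.
have nx0 : forall gam, exists b, lt gam c ->
    lt gam b /\ lt s b /\ lt b c /\ forall x, P gam x -> lt x b.
  move=> gam; have [gc|ngc] := pselect (lt gam c); last by exists gam.
  have [b1 [b1c b1P]] := regR lic cs (fun x (h : P gam x) => h.2.1) (Pb gam gc).
  pose m := mx (b1, mx (gam, s)).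
  have mc : lt m c by apply: mx_lt => //=; apply: mx_lt.
  have [b [mb bc]] := lim m mc.
  exists b => _; split; last split; last split => //.
  - exact: nlt_lt (@mx_ge1 (gam, s)) (nlt_lt (@mx_ge2 (b1, mx (gam, s))) mb).
  - exact: nlt_lt (@mx_ge2 (gam, s)) (nlt_lt (@mx_ge2 (b1, mx (gam, s))) mb).
  - move=> x Px; apply: trans (b1P x Px) _.
    exact: nlt_lt (@mx_ge1 (b1, mx (gam, s))) mb.
have [nx nxP] := choice nx0.
pose gs := fix gs n := if n is k.+1 then nx (gs k) else s.
have gsc : forall n, lt (gs n) c.
  by elim=> [|n IH] //=; case: (nxP _ IH) => _ [_ []].
have gsS : forall n, lt (gs n) (gs n.+1).
  by move=> n /=; case: (nxP _ (gsc n)).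
have sgs : forall n, lt s (gs n.+1).
  by move=> n /=; case: (nxP _ (gsc n)) => _ [].
have gsP : forall n x, P (gs n) x -> lt x (gs n.+1).
  by move=> n x Px /=; case: (nxP _ (gsc n)) => _ [_ [_]]; apply.
have [B [Bc BP]] : exists B, lt B c /\ forall x, range gs x -> lt x B.
  apply: (regR lic cs).
    by move=> x [n _ <-]; apply: gsc.
  apply: card_le_trans (card_image_le _ _) _.
  by move: (lic) => [/infiniteP linf _].
have [gm [gmub gmmin]] := @least (fun x => forall n, lt (gs n) x)
   (ex_intro _ B (fun n => BP _ (ex_intro2 _ _ n I erefl))).
have gmc : lt gm c.
  apply: nlt_lt _ Bc; apply: gmmin => n; apply: BP; by exists n.
have sgm : lt s gm by apply: trans (sgs 0) (gmub 1).
have fgm : lt (f gm) gm by apply: freg; [apply: WX|exists s].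
have [n nfg] : exists n, ~ lt (gs n) (f gm).
  apply: contrapT => /forallNP h.
  by apply: (gmmin (f gm)) => // n; apply: contrapT; apply: h.
have fgs : lt (f gm) (gs n.+1) by apply: nlt_lt nfg (gsS n).
have := gsP n.+1 gm (conj sgm (conj gmc fgs)).
by apply: asym; apply: gmub.
Qed.

Lemma succ_uniq l l' s : is_succ lt l s -> is_succ lt l' s -> l = l'.
Proof.
move=> [ls hs] [l's hs']; case: (tri l l') => [h|[//|h]].
  by case: (hs l' h) => [E|h']; [rewrite E in l's; case: (irr l's)|case: (asym h' l's)].
by case: (hs' l h) => [E|h']; [rewrite E in ls; case: (irr ls)|case: (asym h' ls)].
Qed.

Lemma succ_uniq2 l s s' : is_succ lt l s -> is_succ lt l s' -> s = s'.
Proof.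
move=> [ls hs] [ls' hs']; case: (hs s' ls') => [//|h].
by case: (hs' s ls) => [//|h']; case: (asym h h').
Qed.

Lemma cs_uniq l c c' : is_card_succ lt l c -> is_card_succ lt l c' -> c = c'.
Proof.
move=> [c1 c2] [c1' c2']; case: (c2 c' c1') => [//|h].
by case: (c2' c c1) => [//|h']; case: (asym h h').
Qed.

Lemma nomax (Hlim : limit_cardinal_type lt) a : exists b, lt a b.
Proof.
have [b hb] := Hlim a; exists b; apply: contrapT => h; apply: hb; exact: seg_cle.
Qed.

Lemma ex_succ (Hlim : limit_cardinal_type lt) l : exists s, is_succ lt l s.
Proof.
have [s [ls smin]] := @least (fun x => lt l x) (nomax Hlim l).
exists s; split => // x lx; case: (nlt_le (smin x lx)) => [h|->]; [by right|by left].
Qed.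

Lemma ex_cs (Hlim : limit_cardinal_type lt) l : exists c, is_card_succ lt l c.
Proof.
have [c [lc cmin]] := @least (fun x => ~ (seg lt x #<= seg lt l)) (Hlim l).
exists c; split => // x lx; case: (nlt_le (cmin x lx)) => [h|->]; [by right|by left].
Qed.

Lemma ex_infcard (Hunc : uncountable_type T) (Hreg : regular_type lt)
  (Hlim : limit_cardinal_type lt) th : exists l, infcard l /\ lt th l.
Proof.
have [nxt nxtP] := choice (nomax Hlim).
pose e := fix e n := if n is k.+1 then nxt (e k) else th.
have emono : forall m n, (m < n)%N -> lt (e m) (e n).
  move=> m; elim=> [//|n IH]; rewrite ltnS leq_eqVlt => /orP[/eqP->|h].
    exact: nxtP.
  exact: trans (IH h) (nxtP _).
have [w wP] : bounded lt (range e).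
  apply: contrapT => /Hreg h; apply: Hunc.
  apply: card_le_trans h _; apply: card_le_trans (card_image_le _ _) _.
  exact: card_lexx.
have winf : infinite_set (seg lt w).
  apply/infiniteP; apply: (@cle_intro _ _ _ _ e).
    by move=> n _; apply: wP; exists n.
  move=> m n _ _ E; apply/eqP; case: (ltngtP m n) => // h.
    by have := emono _ _ h; rewrite E => /irr.
  by have := emono _ _ h; rewrite E => /irr.
have [b hb] := Hlim th.
pose m := mx (b, w).
have [l [[linf lnot] lmin]] := @least (fun x => infinite_set (seg lt x) /\ ~ (seg lt x #<= seg lt th))
  (ex_intro _ m (conj (sub_infinite_set (seg_sub (@mx_ge2 (b, w))) winf)
     (fun h => hb (card_le_trans (seg_cle (@mx_ge1 (b, w))) h)))).
exists l; split.
  split => // b' b'l h.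
  have [fin|inf] := pselect (finite_set (seg lt b')).
    exact: linf (card_le_finite h fin).
  have : seg lt b' #<= seg lt th.
    apply: contrapT => h'; exact: (lmin b' (conj inf h') b'l).
  by move=> h2; apply: lnot; apply: card_le_trans h h2.
apply: contrapT => h; apply: lnot; exact: seg_cle.
Qed.

End WO.

Theorem mainTheorem7 (T : Type) (lt : T -> T -> Prop)
  (Hwo : strict_well_order lt) (Hcard : is_cardinal_type lt)
  (Hunc : uncountable_type T) (Hreg : regular_type lt)
  (Hlim : limit_cardinal_type lt) :
  ~ prepleasant lt (Jk lt) /\
  Jk lt (Lprime lt) /\
  (forall s, Lprime lt s -> bounded lt (Aseq lt s)) /\
  ~ Jk lt (Lprime lt `|` diag_union lt (Lprime lt) (Aseq lt)).
Proof.
have [t0 _] : exists t : T, True.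
  apply: contrapT => h; apply: Hunc.
  apply: (@cle_intro _ _ _ _ (fun _ => 0%N)) => x; by case: h; exists x.
have notJ : forall X, diag_union lt (Lprime lt) (Aseq lt) `<=` X -> ~ Jk lt X.
  move=> X sub [f [th [freg fib]]].
  have [l [lic thl]] := (@ex_infcard T lt Hwo) Hunc Hreg Hlim th.
  have [s ss] := (@ex_succ T lt Hwo) Hlim l.
  have [c cs] := (@ex_cs T lt Hwo) Hlim l.
  apply: (@no_J T lt Hwo l s c X lic ss cs _ f th freg fib thl).
  move=> x sx xc; apply: sub; exists s; split => //; split.
    by exists l.
  by exists l, c.
have part3 : forall s, Lprime lt s -> bounded lt (Aseq lt s).
  move=> s [l [lic ss]].
  have [c cs] := (@ex_cs T lt Hwo) Hlim l.
  exists c => x [l' [c' [_ [ss' [cs' [_ xc']]]]]].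
  have E := (@succ_uniq T lt Hwo _ _ _) ss' ss; subst l'.
  by rewrite ((@cs_uniq T lt Hwo _ _ _) cs cs').
have part2 : Jk lt (Lprime lt).
  have [f fP] := choice (fun s => (fun H : (exists l, Lprime lt s -> is_succ lt l s) => H)
    (match pselect (Lprime lt s) with
     | left h => let: ex_intro l (conj _ hl) := h in ex_intro _ l (fun _ => hl)
     | right h => ex_intro _ s (fun h' => False_ind _ (h h')) end)).
  have [th th0] := (@nomax T lt Hwo) Hlim t0.
  exists f, th; split.
    by move=> a La _; case: (fP a La).
  move=> eta; apply: (@cle_intro _ _ _ _ (fun _ => t0)) => //.
  move=> x y [Lx fx] [Ly fy]; have h := fP y Ly.
  rewrite /= in fx fy; rewrite fy -fx in h. move=> _; exact: (@succ_uniq2 T lt Hwo _ _ _ (fP x Lx) h).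
split; last split => //; last split => //.
  move=> pp; apply: (notJ (diag_union lt (Lprime lt) (Aseq lt))) => //.
  apply: pp => // a.
  have [La|nLa] := pselect (Lprime lt a); first exact: part3.
  exists t0 => x [l [c [lic [ss _]]]]; exfalso; apply: nLa; by exists l.
by apply: notJ => x h; right.
Qed.
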